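(* Let $M$ be a $3$-connected simple matroid with $r(M)\ge 3$, and let $C^*$ be a cocircuit of $M$ of rank $3$. If $C^*$ contains two elements that are not vertically contractible in $M$, then all the elements of $C^*$ that are not vertically contractible in $M$ lie in a common non-trivial line of $M$. Moreover, $C^*$ contains a vertically contractible element of $M$.
   Context: An element $x$ is vertically contractible in $M$ if $\mathrm{si}(M/x)$, the simplification of $M/x$, is $3$-connected. A non-trivial line is a rank-$2$ flat with at least three elements. *)

(* Defs.v *)
(* Finite matroids given by a ground set E : {set T} and a
   rank function r : {set T} -> nat (only its values on subsets of E matter). *)
From mathcomp Require Import all_boot.
Set Implicit Arguments. Unset Strict Implicit. Unset Printing Implicit Defensive.

Section Matroids.
Variable T : finType.
Implicit Types (E X Y : {set T}) (r : {set T} -> nat) (e f x : T).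

Definition is_matroid E r : Prop :=
  [/\ (forall X, X \subset E -> r X <= #|X|),
      (forall X Y, X \subset Y -> Y \subset E -> r X <= r Y) &
      (forall X Y, X \subset E -> Y \subset E ->
         r (X :|: Y) + r (X :&: Y) <= r X + r Y)].

Definition simple E r : Prop :=
  (forall e, e \in E -> r [set e] = 1) /\
  (forall e f, e \in E -> f \in E -> e != f -> r [set e; f] = 2).

Definition k_separation E r (k : nat) X : Prop :=
  [/\ X \subset E, k <= #|X|, k <= #|E :\: X| & r X + r (E :\: X) < r E + k].

Definition n_connected E r (n : nat) : Prop :=
  forall k X, 1 <= k -> k < n -> ~ k_separation E r k X.

Definition three_connected E r : Prop := n_connected E r 3.

Definition circuit E r X : Prop :=
  [/\ X \subset E, r X < #|X| &
      forall Y, Y \proper X -> r Y = #|Y|].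

Definition dual_rank E r : {set T} -> nat :=
  fun X => #|X| + r (E :\: X) - r E.

Definition cocircuit E r X : Prop := circuit E (dual_rank E r) X.

Definition flat E r X : Prop :=
  X \subset E /\ (forall e, e \in E :\: X -> r X < r (e |: X)).

Definition nontrivial_line E r L : Prop :=
  [/\ flat E r L, r L = 2 & 3 <= #|L|].

Definition contr_ground E x : {set T} := E :\ x.
Definition contr_rank r x : {set T} -> nat := fun X => r (x |: X) - r [set x].

(* canonical simplification si(N): keep non-loops that are minimal (w.r.t. the
   enumeration order of T) in their parallel class; the rank function is
   the restriction of that of N. *)
Definition si_ground E r : {set T} :=
  [set e in E | (r [set e] != 0) &&
     [forall f in E, ((f != e) && (r [set f] != 0) && (r [set e; f] == 1))
                      ==> (enum_rank e < enum_rank f)]].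

Definition vert_contractible E r x : Prop :=
  three_connected (si_ground (contr_ground E x) (contr_rank r x)) (contr_rank r x).

End Matroids.

(* Main.v *)
Require Import Defs.
From mathcomp Require Import all_boot zify.
From Stdlib Require Import Classical.
Set Implicit Arguments. Unset Strict Implicit. Unset Printing Implicit Defensive.

Section Base.
Variable T : finType.
Variable E : {set T}.
Variable r : {set T} -> nat.
Implicit Types (X Y S U A B : {set T}) (e f g a b c : T).
Hypothesis HM : is_matroid E r.
Hypothesis HS : simple E r.
Hypothesis H3 : three_connected E r.

Lemma rmono X Y : X \subset Y -> Y \subset E -> r X <= r Y.
Proof. by case: HM => _ h _ ? ?; apply: h. Qed.

Lemma rcard X : X \subset E -> r X <= #|X|.
Proof. by case: HM => h _ _; apply: h. Qed.

Lemma rsub' A B S1 S2 : A \subset E -> B \subset E ->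
  S1 \subset A :|: B -> S2 \subset A :&: B -> r S1 + r S2 <= r A + r B.
Proof.
move=> AE BE s1 s2.
have h : r (A :|: B) + r (A :&: B) <= r A + r B by case: HM => _ _ h; apply: h.
apply: leq_trans h; apply: leq_add; apply: rmono => //.
  by rewrite subUset AE.
by apply: subset_trans AE; apply: subsetIl.
Qed.

Lemma r1 e : e \in E -> r [set e] = 1.
Proof. by case: HS => h _; apply: h. Qed.

Lemma r2 e f : e \in E -> f \in E -> e != f -> r [set e; f] = 2.
Proof. by case: HS => _ h; apply: h. Qed.

Lemma sub1E e : e \in E -> [set e] \subset E.
Proof. by rewrite sub1set. Qed.

Lemma rU1 S e : S \subset E -> e \in E -> r (e |: S) <= (r S).+1.
Proof.
move=> SE eE; have := @rsub' [set e] S (e |: S) set0 (sub1E eE) SE (subxx _) (sub0set _).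
by rewrite r1 // add1n; apply: leq_trans; apply: leq_addr.
Qed.

Lemma U1E S e : S \subset E -> e \in E -> e |: S \subset E.
Proof. by move=> SE eE; rewrite subUset sub1set eE. Qed.

Lemma rcl S U e : S \subset U -> U \subset E -> e \in E ->
  r (e |: S) <= r S -> r (e |: U) <= r U.
Proof.
move=> SU UE eE h.
have SE := subset_trans SU UE.
have := @rsub' (e |: S) U (e |: U) S (U1E SE eE) UE _ _.
have -> : e |: S :|: U = e |: U.
  by rewrite -setUA (setUidPr SU).
move=> /(_ (subxx _)); rewrite subsetI subsetUr SU => /(_ isT) h2.
by rewrite -(leq_add2r (r S)); apply: leq_trans h2 _; rewrite addnC leq_add2l.
Qed.

Lemma rclU S A : S \subset E -> A \subset E ->
  (forall e, e \in A -> r (e |: S) <= r S) -> r (S :|: A) <= r S.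
Proof.
move=> SE; elim: {A}_.+1 {-2}A (ltnSn #|A|) => // n IH A lt AE h.
case: (set_0Vmem A) => [->|[a aA]]; first by rewrite setU0.
have ->: S :|: A = a |: (S :|: (A :\ a)).
  by rewrite setUCA -{1}(setD1K aA) setUA.
have AE' : A :\ a \subset E by apply: subset_trans (subD1set _ _) AE.
have IH' : r (S :|: (A :\ a)) <= r S.
  apply: IH => //.
    by rewrite (cardsD1 a) aA in lt.
  by move=> e /setD1P [_ eA]; apply: h.
apply: leq_trans IH'; apply: (@rcl S) => //.
- exact: subsetUl.
- by rewrite subUset SE.
- exact: (subsetP AE).
- exact: h.
Qed.

Lemma conn1 S : S \subset E -> 0 < #|S| -> 0 < #|E :\: S| -> r E < r S + r (E :\: S).
Proof.
move=> SE c1 c2; rewrite ltnNge; apply/negP => h.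
apply: (H3 (k:=1) (X:=S)) => //; split => //.
by rewrite addn1 ltnS.
Qed.

Lemma conn2 S : S \subset E -> 1 < #|S| -> 1 < #|E :\: S| -> r E + 2 <= r S + r (E :\: S).
Proof.
move=> SE c1 c2; rewrite leqNgt; apply/negP => h.
by apply: (H3 (k:=2) (X:=S)) => //; split.
Qed.

Lemma card2 A a b : a \in A -> b \in A -> a != b -> 1 < #|A|.
Proof. by move=> aA bA ab; apply/card_gt1P; exists a, b. Qed.

Lemma card3 A a b c : a \in A -> b \in A -> c \in A -> a != b -> a != c -> b != c -> 2 < #|A|.
Proof.
move=> aA bA cA ab ac bc.
have: [set a; b; c] \subset A by apply/subsetP => z; rewrite !inE => /orP[/orP[]|] /eqP->.
move/subset_leq_card; apply: leq_trans.
by rewrite setUC cardsU1 cards2 !inE ab ![c == _]eq_sym (negbTE ac) (negbTE bc).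
Qed.

Lemma rank_card2 S : S \subset E -> 2 <= r S -> 1 < #|S|.
Proof. by move=> SE h; apply: leq_trans h (rcard SE). Qed.

Lemma line_sub e f S : e \in E -> f \in E -> e != f -> S \subset E ->
  (forall g, g \in S -> r (g |: [set e; f]) <= 2) -> r ([set e; f] :|: S) <= 2.
Proof.
move=> eE fE ef SE h.
have efE : [set e; f] \subset E by rewrite subUset !sub1set eE fE.
rewrite -(r2 eE fE ef); apply: rclU => // g gS; rewrite r2 //; exact: h.
Qed.


Lemma subE_in S e : S \subset E -> e \in S -> e \in E.
Proof. by move/subsetP; apply. Qed.


Record vsep x X Y : Prop := VSep {
  vs_x : x \in E;
  vs_cov : X :|: Y = E :\ x;
  vs_dis : [disjoint X & Y];
  vs_clX : r (x |: X) = r X;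
  vs_clY : r (x |: Y) = r Y;
  vs_sum : r X + r Y <= r E + 2;
  vs_3X : 3 <= r X;
  vs_3Y : 3 <= r Y }.

Section VsepBasic.
Variables (x : T) (X Y : {set T}).
Hypothesis V : vsep x X Y.

Lemma vsep_sym : vsep x Y X.
Proof.
case: V => *; split => //; first by rewrite setUC.
  by rewrite disjoint_sym.
by rewrite addnC.
Qed.

Lemma vs_XE' : X \subset E :\ x.
Proof. by rewrite -(vs_cov V) subsetUl. Qed.
Lemma vs_YE' : Y \subset E :\ x.
Proof. by rewrite -(vs_cov V) subsetUr. Qed.
Lemma vs_XE : X \subset E.
Proof. exact: subset_trans vs_XE' (subD1set _ _). Qed.
Lemma vs_YE : Y \subset E.
Proof. exact: subset_trans vs_YE' (subD1set _ _). Qed.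
Lemma vs_xX : x \notin X.
Proof. by apply/negP => /(subsetP vs_XE'); rewrite !inE eqxx. Qed.
Lemma vs_xY : x \notin Y.
Proof. by apply/negP => /(subsetP vs_YE'); rewrite !inE eqxx. Qed.
Lemma vs_mem e : e \in E -> e != x -> (e \in X) || (e \in Y).
Proof. move=> eE ex; have : e \in E :\ x by rewrite !inE ex eE. by rewrite -(vs_cov V) inE. Qed.
Lemma vs_XnY e : e \in X -> e \in Y -> False.
Proof. by move=> eX; rewrite (disjointFr (vs_dis V) eX). Qed.
Lemma vs_sum' : r (x |: X) + r (x |: Y) <= r E + 2.
Proof. by rewrite (vs_clX V) (vs_clY V) (vs_sum V). Qed.

End VsepBasic.

Lemma rx_ge1 x (Z : {set T}) : x \in E -> Z \subset E -> 1 <= r (x |: Z).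
Proof.
move=> xE ZE; rewrite -(r1 xE); apply: rmono; first exact: subsetUl.
exact: U1E.
Qed.

Lemma side_cl x X Y k : x \in E -> X :|: Y = E :\ x -> [disjoint X & Y] ->
  1 <= k -> k <= 2 -> k.+1 <= r (x |: X) -> 2 <= r (x |: Y) ->
  r (x |: X) + r (x |: Y) <= r E + k ->
  [/\ r (x |: X) <= r X, 1 < #|X|, 1 < #|E :\: X| & r (E :\: X) <= r (x |: Y)].
Proof.
move=> xE cov dis k1 k2 lX lY sm.
have XE : X \subset E by apply: subset_trans (subD1set E x); rewrite -cov subsetUl.
have YE : Y \subset E by apply: subset_trans (subD1set E x); rewrite -cov subsetUr.
have xX : x \notin X by apply/negP => /(subsetP (subsetUl X Y)); rewrite cov !inE eqxx.
have sub1 : E :\: X \subset x |: Y.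
  apply/subsetP => z; rewrite !inE => /andP[zX zE].
  case: (eqVneq z x) => //= zx.
  have : z \in X :|: Y by rewrite cov !inE zx zE.
  by rewrite inE (negbTE zX).
have sub2 : x |: Y \subset E :\: X.
  apply/subsetP => z; rewrite !inE => /orP[/eqP->|zY]; first by rewrite xE (negbTE xX).
  rewrite (subsetP YE _ zY) andbT; apply/negP => zX.
  by move: dis; rewrite disjoints_subset => /subsetP /(_ z zX); rewrite inE zY.
have rEX : r (E :\: X) <= r (x |: Y) by apply: rmono => //; exact: U1E.
have cEX : 1 < #|E :\: X|.
  apply: leq_trans (subset_leq_card sub2).
  by apply: rank_card2 => //; exact: U1E.
have cX1 : #|x |: X| <= #|X|.+1 by rewrite cardsU1 xX.
have rcX := rcard (U1E XE xE).
have rX := rmono (subsetUr [set x] X) (U1E XE xE).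
case: (ltnP 1 #|X|) => cX.
  have h := conn2 XE cX cEX; split => //; clear -rEX sm k2 h; lia.
exfalso.
have X0 : 0 < #|X|.
  rewrite card_gt0; apply/negP => /eqP X0; move: lX; rewrite X0 setU0 r1 //.
  by move=> h; have := leq_ltn_trans k1 h.
have := conn1 XE X0 (ltnW cEX); have := rcard XE.
clear -rEX sm k2 lX rcX cX1 cX; lia.
Qed.

Lemma part_vsep x X Y k : x \in E -> X :|: Y = E :\ x -> [disjoint X & Y] ->
  1 <= k <= 2 -> k.+1 <= r (x |: X) -> k.+1 <= r (x |: Y) ->
  r (x |: X) + r (x |: Y) <= r E + k -> vsep x X Y.
Proof.
move=> xE cov dis /andP[k1 k2] lX lY sm.
have lY2 : 2 <= r (x |: Y) by apply: leq_trans lY.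
have lX2 : 2 <= r (x |: X) by apply: leq_trans lX.
have [hX cX cEX rEX] := side_cl xE cov dis k1 k2 lX lY2 sm.
have cov' : Y :|: X = E :\ x by rewrite setUC.
have dis' : [disjoint Y & X] by rewrite disjoint_sym.
have smY : r (x |: Y) + r (x |: X) <= r E + k by rewrite addnC.
have [hY cY _ _] := side_cl xE cov' dis' k1 k2 lY lX2 smY.
have XE : X \subset E by apply: subset_trans (subD1set E x); rewrite -cov subsetUl.
have YE : Y \subset E by apply: subset_trans (subD1set E x); rewrite -cov subsetUr.
have eX : r (x |: X) = r X by apply/eqP; rewrite eqn_leq hX rmono ?subsetUr ?U1E.
have eY : r (x |: Y) = r Y by apply/eqP; rewrite eqn_leq hY rmono ?subsetUr ?U1E.
have h := conn2 XE cX cEX.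
rewrite eX eY in sm lX lY rEX.
split => //; clear -h sm k2 lX lY rEX; lia.
Qed.


Section SiPart.
Variable x : T.
Hypothesis xE : x \in E.
Local Notation par e f := (r (x |: [set e; f]) <= 2).
Local Notation Sg := (si_ground (E :\ x) (contr_rank r x)).

Lemma xsetE (Z : {set T}) : Z \subset E :\ x -> x |: Z \subset E.
Proof. by move=> h; apply: U1E => //; apply: subset_trans h (subD1set _ _). Qed.

Lemma inE' e : e \in E :\ x -> e \in E /\ x != e.
Proof. by rewrite !inE => /andP[ex ->]; rewrite eq_sym. Qed.

Lemma set2E' e f : e \in E :\ x -> f \in E :\ x -> [set e; f] \subset E :\ x.
Proof. by move=> eE fE; apply/subsetP => z; rewrite !inE => /orP[] /eqP->; [move: eE | move: fE]; rewrite !inE. Qed.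

Lemma par_ge e f : e \in E :\ x -> f \in E :\ x -> 2 <= r (x |: [set e; f]).
Proof.
move=> eE fE; have [eE1 xe] := inE' eE.
rewrite -(r2 xE eE1 xe); apply: rmono; last exact: xsetE (set2E' eE fE).
by apply/subsetP => z; rewrite !inE => /orP[]->; rewrite ?orbT.
Qed.

Lemma parC e f : r (x |: [set e; f]) = r (x |: [set f; e]).
Proof. by rewrite [[set e; f]]setUC. Qed.

Lemma par_refl e : e \in E :\ x -> par e e.
Proof.
move=> eE; have [eE1 xe] := inE' eE.
have -> : x |: [set e; e] = [set x; e] by apply/setP => z; rewrite !inE orbb.
by rewrite r2.
Qed.

Lemma par_trans e f g : e \in E :\ x -> f \in E :\ x -> g \in E :\ x ->
  par e f -> par f g -> par e g.
Proof.
move=> eE fE gE h1 h2; have [fE1 xf] := inE' fE.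
have [eE1 _] := inE' eE; have [gE1 _] := inE' gE.
have := @line_sub x f [set e; g] xE fE1 xf.
have egE : [set e; g] \subset E by apply: subset_trans (set2E' eE gE) (subD1set _ _).
move=> /(_ egE) h; apply: leq_trans (h _).
  apply: rmono; first by apply/subsetP => z; rewrite !inE => /orP[|/orP[]] ->; rewrite ?orbT.
  by rewrite subUset egE andbT subUset !sub1set xE fE1.
move=> z; rewrite !inE => /orP[] /eqP ->.
  apply: leq_trans h1; apply: rmono; last exact: xsetE (set2E' eE fE).
  by apply/subsetP => w; rewrite !inE => /orP[|/orP[]] ->; rewrite ?orbT.
apply: leq_trans h2; apply: rmono; last exact: xsetE (set2E' fE gE).
by apply/subsetP => w; rewrite !inE => /orP[|/orP[]] ->; rewrite ?orbT.
Qed.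

Lemma cr_eq1 e f : e \in E :\ x -> f \in E :\ x ->
  (contr_rank r x [set e; f] == 1) = par e f.
Proof.
move=> eE fE; rewrite /contr_rank r1 //; have := par_ge eE fE.
case: (r (x |: [set e; f])) => [|[|[|n]]] //.
Qed.

Lemma cr_1 e : e \in E :\ x -> contr_rank r x [set e] != 0.
Proof.
move=> eE; have [eE1 xe] := inE' eE.
by rewrite /contr_rank r1 // r2.
Qed.

Lemma SgE : Sg \subset E :\ x.
Proof. by apply/subsetP => z; rewrite inE => /andP[]. Qed.

Lemma S_min s g : s \in Sg -> g \in E :\ x -> g != s -> par s g ->
  enum_rank s < enum_rank g.
Proof.
move=> sS gE gs p; move: sS; rewrite inE => /andP[sE /andP[_ /forall_inP h]].
by have := h g gE; rewrite gs cr_1 // cr_eq1 // p.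
Qed.

Lemma S_npar s t : s \in Sg -> t \in Sg -> s != t -> par s t -> False.
Proof.
move=> sS tS st p.
have ts : t != s by rewrite eq_sym.
have h1 := S_min sS (subsetP SgE _ tS) ts p.
rewrite parC in p; have h2 := S_min tS (subsetP SgE _ sS) st p.
by have := ltn_trans h1 h2; rewrite ltnn.
Qed.

Lemma S_rep e : e \in E :\ x -> exists2 s, s \in Sg & par e s.
Proof.
move=> eE.
pose P := [pred f | (f \in E :\ x) && par e f].
have eP : P e by rewrite /P /= eE par_refl.
case: (@arg_minnP _ e P (fun f => enum_rank f) eP) => s /andP[sE es] smin.
exists s => //.
rewrite inE sE cr_1 //=; apply/forall_inP => g gE; apply/implyP => /andP[/andP[gs _]].
rewrite cr_eq1 // => sg.
have eg : par e g := par_trans eE sE gE es sg.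
have := smin g; rewrite /P /= gE eg => /(_ isT).
rewrite leq_eqVlt => /orP[/eqP|//] /val_inj /enum_rank_inj gs'.
by move: gs; rewrite gs' eqxx.
Qed.

End SiPart.

Lemma nonvc_vsep x : x \in E -> ~ vert_contractible E r x -> exists X Y, vsep x X Y.
Proof.
move=> xE nvc.
have [k [X [k1 k3 ks]]] : exists k X, [/\ 1 <= k, k < 3 &
    k_separation (si_ground (E :\ x) (contr_rank r x)) (contr_rank r x) k X].
  apply: NNPP => h; apply: nvc => k X k1 k3 ks; apply: h; exists k, X; by split.
set S := si_ground (E :\ x) (contr_rank r x) in ks.
case: ks => XS kX kSX ksum.
have SE : S \subset E :\ x := SgE x.
have XE' : X \subset E :\ x := subset_trans XS SE.
pose Xh := [set e in E :\ x | [exists s in X, r (x |: [set e; s]) <= 2]].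
pose Yh := (E :\ x) :\: Xh.
have XhE : Xh \subset E :\ x by apply/subsetP => z; rewrite inE => /andP[].
have cov : Xh :|: Yh = E :\ x by rewrite /Yh -{2}(setID (E :\ x) Xh) (setIidPr XhE).
have dis : [disjoint Xh & Yh].
  rewrite disjoints_subset; apply/subsetP => z zX; move: (zX); rewrite !inE => ->. by [].
have XXh : X \subset Xh.
  apply/subsetP => s sX; rewrite inE (subsetP XE' _ sX) /=.
  by apply/exists_inP; exists s => //; apply: par_refl (subsetP XE' _ sX).
have SXYh : S :\: X \subset Yh.
  apply/subsetP => s; rewrite inE => /andP[sX sS].
  have sE := subsetP SE _ sS.
  rewrite inE sE andbT inE sE /=; apply/exists_inP => -[t tX p].
  have tS := subsetP XS _ tX.
  apply: (S_npar xE sS tS _ p); apply/eqP => st; by move: sX; rewrite st tX.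
have pcl : forall (Z : {set T}) (e0 s0 : T), Z \subset E :\ x -> s0 \in Z -> e0 \in E :\ x ->
    r (x |: [set e0; s0]) <= 2 -> r (e0 |: (x |: Z)) <= r (x |: Z).
  move=> Z e s.
  move=> ZE sZ eE p; have sE := subsetP ZE _ sZ.
  have [sE1 xs] := inE' sE; have [eE1 _] := inE' eE.
  apply: (@rcl (x |: [set s])).
  - by apply: setUS; rewrite sub1set.
  - exact: (@xsetE x xE Z ZE).
  - exact: eE1.
  rewrite r2 //; apply: leq_trans p; apply: rmono; last exact: (@xsetE x xE _ (set2E' eE sE)).
  by apply/subsetP => w; rewrite !inE => /orP[|/orP[]] ->; rewrite ?orbT.
have rXh : r (x |: Xh) <= r (x |: X).
  apply: leq_trans (_ : r ((x |: X) :|: Xh) <= _).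
    apply: rmono; first by apply: setSU; apply: subsetUl.
    by rewrite subUset ((@xsetE x xE _ XE')) (subset_trans XhE (subD1set _ _)).
  apply: rclU; first exact: (@xsetE x xE _ XE').
    exact: subset_trans XhE (subD1set _ _).
  move=> e; rewrite inE => /andP[eE /exists_inP[s sX p]].
  exact: pcl _ _ _ XE' sX eE p.
have SXE : S :\: X \subset E :\ x := subset_trans (subsetDl _ _) SE.
have YhE : Yh \subset E :\ x := subsetDl _ _.
have rYh : r (x |: Yh) <= r (x |: (S :\: X)).
  apply: leq_trans (_ : r ((x |: (S :\: X)) :|: Yh) <= _).
    apply: rmono; first by apply: setSU; apply: subsetUl.
    by rewrite subUset ((@xsetE x xE _ SXE)) (subset_trans YhE (subD1set _ _)).
  apply: rclU; first exact: (@xsetE x xE _ SXE).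
    exact: subset_trans YhE (subD1set _ _).
  move=> e eY; have eE := subsetP YhE _ eY.
  have [s sS p] := S_rep xE eE.
  apply: (pcl _ _ _ SXE _ eE p); rewrite inE sS andbT; apply/negP => sX.
  move: eY; rewrite /Yh inE => /andP[/negP nX _]; apply: nX. rewrite /Xh inE eE /=; apply/exists_inP; by exists s.
have low : forall (Z W : {set T}), Z \subset S -> k <= #|Z| -> Z \subset W -> W \subset E :\ x ->
    k.+1 <= r (x |: W).
  move=> Z W.
  move=> ZS kZ ZW WE.
  case: k k1 k3 kX kSX ksum kZ => [//|[|[|//]]] _ _ _ _ _ kZ.
    have [s sZ] : exists s, s \in Z by apply/card_gt0P.
    have sE := subsetP WE _ (subsetP ZW _ sZ); have [sE1 xs] := inE' sE.
    rewrite -(r2 xE sE1 xs); apply: rmono; last exact: (@xsetE x xE _ WE).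
    by apply: setUS; rewrite sub1set; apply: subsetP ZW _ sZ.
  have [s [t [sZ tZ st]]] := (card_gt1P kZ).
  have sE := subsetP WE _ (subsetP ZW _ sZ); have tE := subsetP WE _ (subsetP ZW _ tZ).
  have : ~~ (r (x |: [set s; t]) <= 2).
    by apply/negP; apply: (S_npar xE (subsetP ZS _ sZ) (subsetP ZS _ tZ) st).
  rewrite -ltnNge => h; apply: leq_trans h _; apply: rmono; last exact: (@xsetE x xE _ WE).
  by apply: setUS; apply/subsetP => w; rewrite !inE => /orP[] /eqP ->; [exact: subsetP ZW _ sZ | exact: subsetP ZW _ tZ].
have lX := low _ _ XS kX XXh XhE.
have lY := low _ _ (subsetDl _ _) kSX SXYh YhE.
have rSE : r (x |: S) <= r E by apply: rmono ((@xsetE x xE _ SE)) (subxx _).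
have g1 := rx_ge1 xE (subset_trans XE' (subD1set _ _)).
have g2 := rx_ge1 xE (subset_trans SXE (subD1set _ _)).
have g3 := rx_ge1 xE (subset_trans SE (subD1set _ _)).
rewrite /contr_rank r1 // in ksum.
exists Xh, Yh; apply: (@part_vsep x Xh Yh k) => //.
  by rewrite k1 -ltnS.
clear -ksum rXh rYh rSE g1 g2 g3; lia.
Qed.

Section Cocirc.
Variable Cs : {set T}.
Hypothesis HC : cocircuit E r Cs.
Hypothesis HC3 : r Cs = 3.
Local Notation H := (E :\: Cs).

Lemma CsE : Cs \subset E.
Proof. by case: HC. Qed.

Lemma Cs3 : 2 < #|Cs|.
Proof. by have := rcard CsE; rewrite HC3. Qed.

Lemma HE : H \subset E.
Proof. exact: subsetDl. Qed.

Lemma rH : r H < r E.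
Proof. by case: HC => _ h _; move: h; rewrite /dual_rank; lia. Qed.

Lemma rHc c : c \in Cs -> r (c |: H) = r E.
Proof.
move=> cCs; case: HC => _ _ h.
have := h (Cs :\ c) (properD1 cCs); rewrite /dual_rank.
have -> : E :\: (Cs :\ c) = c |: H.
  apply/setP => z; rewrite !inE; case: (eqVneq z c) => [->|] //=.
  by rewrite (subE_in CsE cCs).
have cE := subE_in CsE cCs.
have := rmono (U1E HE cE) (subxx E).
have : 1 < #|Cs :\ c| by have := Cs3; rewrite (cardsD1 c) cCs.
lia.
Qed.

Lemma rHx (Z : {set T}) c : Z \subset H -> c \in Cs -> r (c |: Z) = (r Z).+1.
Proof.
move=> ZH cCs; have cE := subE_in CsE cCs; have ZE := subset_trans ZH HE.
apply/eqP; rewrite eqn_leq rU1 //=.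
have := @rsub' (c |: Z) H (c |: H) Z (U1E ZE cE) HE _ _.
rewrite rHc //; have := rH.
have -> : c |: Z :|: H = c |: H by rewrite -setUA (setUidPr ZH).
rewrite subsetI subsetUr ZH subxx.
move=> h1 /(_ isT isT); lia.
Qed.


Lemma vs_meet x X Y : vsep x X Y -> x \in Cs -> exists2 e, e \in X & e \in Cs.
Proof.
move=> V xCs; case: (boolP [exists e, (e \in X) && (e \in Cs)]).
  by move/existsP => [e /andP[]]; exists e.
rewrite negb_exists => /forallP h.
have XH : X \subset H.
  apply/subsetP => z zX; rewrite inE (subE_in (vs_XE V) zX) andbT.
  by have := h z; rewrite zX.
by have := rHx XH xCs; rewrite (vs_clX V); lia.
Qed.

Lemma vs_line x X Y : vsep x X Y -> x \in Cs -> r (x |: (X :&: Cs)) <= 2.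
Proof.
move=> V xCs.
have xE := subE_in CsE xCs.
set W := Y :\: Cs.
have WH : W \subset H by apply: setSD; apply: vs_YE V.
have WE : W \subset E := subset_trans WH HE.
have h1 : r (E :\: W) + r (x |: (X :&: Cs)) <= r (x |: X) + r Cs.
  apply: rsub'.
  - exact: U1E (vs_XE V) xE.
  - exact: CsE.
  - apply/subsetP => z; rewrite !inE => /andP[zW zE].
    case: (eqVneq z x) => //= zx.
    case/orP: (vs_mem V zE zx) => [->//|zY]; move: zW; rewrite zY /=.
    by rewrite andbT negbK orbC => ->.
  - apply/subsetP => z; rewrite !inE => /orP[/eqP->|/andP[->->]]; rewrite ?orbT //.
    by rewrite eqxx xCs.
have h2 : r W + 1 <= r Y.
  rewrite -(vs_clY V) addn1 -(rHx WH xCs); apply: rmono.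
    by apply: setUS; apply: subsetDl.
  exact: U1E (vs_YE V) xE.
have c3 : 1 < #|E :\: W|.
  apply: leq_trans (ltnW Cs3) _; apply: subset_leq_card.
  apply/subsetP => z zCs; rewrite !inE zCs /=; exact: subE_in CsE zCs.
have := vs_sum V; have := vs_3Y V; rewrite (vs_clX V) HC3 in h1.
case: (ltnP 1 #|W|) => cW.
  have := @conn2 W WE cW c3; lia.
have h3 : r E <= r (E :\: W).
  case: (eqVneq W set0) => [->|W0]; first by rewrite setD0.
  have := @conn1 W WE; rewrite card_gt0 W0 => /(_ isT).
  move=> /(_ (ltnW c3)); have := rcard WE; lia.
lia.
Qed.

Lemma vs_N x X Y e : vsep x X Y -> e \in X -> e \in Cs -> X :\ e \subset H ->
  r (x |: Y) < r (e |: (x |: Y)).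
Proof.
move=> V eX eCs XH; rewrite ltnNge; apply/negP => h.
have xE := vs_x V; have eE := subE_in (vs_XE V) eX.
have XE' : X :\ e \subset E := subset_trans XH HE.
have rX : r X = (r (X :\ e)).+1 by rewrite -{1}(setD1K eX) rHx.
have c1 : 1 < #|X :\ e| by apply: rank_card2 => //; have := vs_3X V; lia.
have c2 : 1 < #|E :\: (X :\ e)|.
  apply: (@card2 _ x e).
  - by rewrite !inE xE andbT negb_and (negbTE (vs_xX V)) orbT.
  - by rewrite !inE eE andbT eqxx.
  - by apply/eqP => xe; move: (vs_xX V); rewrite xe eX.
have := conn2 XE' c1 c2.
have : r (E :\: (X :\ e)) <= r (e |: (x |: Y)).
  apply: rmono; last by apply: U1E => //; apply: U1E => //; exact: vs_YE V.
  apply/subsetP => z; rewrite !inE => /andP[zX zE].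
  case: (eqVneq z x) => [->|zx]; rewrite ?eqxx ?orbT //=.
  case/orP: (vs_mem V zE zx) => [zX'|->]; rewrite ?orbT //.
  by move: zX; rewrite zX' andbT negbK => ->.
have := vs_sum V; rewrite -(vs_clY V) in h *; lia.
Qed.


Lemma sideH x y X Y : vsep x X Y -> y \in X ->
  (forall z, z \in Cs -> z \in X -> z = y) -> X :\ y \subset H.
Proof.
move=> V yX h; apply/subsetP => z; rewrite !inE => /andP[zy zX].
rewrite (subE_in (vs_XE V) zX) andbT; apply/negP => zCs.
by move: zy; rewrite (h z zCs zX) eqxx.
Qed.

Lemma triad x y c X Y U V :
  x \in Cs -> y \in Cs -> c \in Cs -> x != y -> x != c -> y != c ->
  Cs \subset [set x; y; c] ->
  vsep x X Y -> y \in X -> c \in Y ->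
  vsep y U V -> x \in U -> c \in V ->
  exists2 w, w \in E :\: Cs & r [set x; y; w] <= 2.
Proof.
move=> xCs yCs cCs xy xc yc Cs3' Vx yX cY Vy xU cV.
have memCs z : z \in Cs -> [\/ z = x, z = y | z = c].
  by move/(subsetP Cs3'); rewrite !inE => /orP[/orP[]|] /eqP ->; constructor.
have xE := subE_in CsE xCs; have yE := subE_in CsE yCs; have cE := subE_in CsE cCs.
have XH : X :\ y \subset H.
  apply: (sideH Vx yX) => z /memCs [E1|E1|E1] zX; rewrite E1 in zX *; rewrite //.
  - by move: (vs_xX Vx); rewrite zX.
  - by case: (vs_XnY Vx zX cY).
have YH : Y :\ c \subset H.
  apply: (sideH (vsep_sym Vx) cY) => z /memCs [E1|E1|E1] zY; rewrite E1 in zY *; rewrite //.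
  - by move: (vs_xY Vx); rewrite zY.
  - by case: (vs_XnY Vx yX zY).
have UH : U :\ x \subset H.
  apply: (sideH Vy xU) => z /memCs [E1|E1|E1] zU; rewrite E1 in zU *; rewrite //.
  - by move: (vs_xX Vy); rewrite zU.
  - by case: (vs_XnY Vy zU cV).
have VH : V :\ c \subset H.
  apply: (sideH (vsep_sym Vy) cV) => z /memCs [E1|E1|E1] zV; rewrite E1 in zV *; rewrite //.
  - by case: (vs_XnY Vy xU zV).
  - by move: (vs_xY Vy); rewrite zV.
have N1 := vs_N Vy xU xCs UH.
have N2 := vs_N (vsep_sym Vx) cY cCs YH.
have yV : y \notin V := vs_xY Vy.
have xY : x \notin Y := vs_xY Vx.
case: (set_0Vmem (X :&: U)) => [a0|[w wa]].
  have XyV : X \subset y |: V.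
    apply/subsetP => z zX; rewrite !inE.
    case: (eqVneq z y) => //= zy.
    have zE := subE_in (vs_XE Vx) zX.
    case/orP: (vs_mem Vy zE zy) => // zU.
    have : z \in X :&: U by rewrite inE zX zU.
    by rewrite a0 inE.
  have := @rcl X (y |: V) x XyV (U1E (vs_YE Vy) yE) xE.
  rewrite (vs_clX Vx) leqnn => /(_ isT); rewrite leqNgt N1 //.
case: (boolP [exists d, (d \in Y :&: V) && (d != c)]); last first.
  rewrite negb_exists => /forallP hd.
  set V' := V :\ c.
  have V'H : V' \subset H := VH.
  have V'X : V' \subset X.
    apply/subsetP => z; rewrite !inE => /andP[zc zV].
    have zE := subE_in (vs_YE Vy) zV.
    have zx : z != x by apply/eqP => zx; rewrite zx in zV; case: (vs_XnY Vy xU zV).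
    case/orP: (vs_mem Vx zE zx) => // zY.
    by have := hd z; rewrite inE zY zV zc.
  have h1 : r (c |: (y |: V')) <= r (y |: V').
    rewrite (rHx V'H yCs).
    have : r (c |: (y |: V')) <= r (y |: V).
      apply: rmono; last by apply: U1E => //; exact: vs_YE Vy.
      apply/subsetP => z; rewrite !inE => /orP[/eqP->|/orP[->|/andP[_ ->]]]; rewrite ?cV ?orbT //.
    rewrite (vs_clY Vy).
    have : r V <= r (c |: V').
      apply: rmono; first by apply/subsetP => z zV; rewrite !inE zV andbT orbN.
      by apply: U1E => //; apply: subset_trans V'H HE.
    rewrite (rHx V'H cCs) => h2 h3; exact: leq_trans h3 h2.
  have S1 : y |: V' \subset x |: X by rewrite subUset sub1set !inE yX orbT /= (subset_trans V'X) ?subsetUr.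
  have := rcl S1 (U1E (vs_XE Vx) xE) cE h1.
  by rewrite leqNgt N2.
case/existsP => d /andP[dYV dc].
set a := X :&: U.
set P := x |: X; set Q := y |: U.
have PE : P \subset E := U1E (vs_XE Vx) xE.
have QE : Q \subset E := U1E (vs_XE Vy) yE.
have s1 : r (P :|: Q) + r (x |: (y |: a)) <= r P + r Q.
  apply: rsub' => //; apply/subsetP => z; rewrite !inE.
  move=> /orP[/eqP->|/orP[/eqP->|/andP[zX zU]]]; rewrite ?eqxx ?xU ?yX ?zX ?zU ?orbT //.
have s2 : r (Y :|: V) + r (Y :&: V) <= r Y + r V.
  by apply: rsub'; rewrite ?subxx //; [exact: vs_YE Vx | exact: vs_YE Vy].
have YVE : Y :&: V \subset E by apply: subset_trans (vs_YE Vx); apply: subsetIl.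
have s3 : r E + 2 <= r (Y :&: V) + r (E :\: (Y :&: V)).
  apply: conn2 => //.
    by apply: (@card2 _ c d) => //; [rewrite inE cY cV | rewrite eq_sym].
  apply: (@card2 _ x y) => //; rewrite !inE ?xE ?yE !andbT.
    by rewrite (negbTE xY).
  by rewrite (negbTE yV) andbF.
have s4 : r (E :\: (Y :&: V)) <= r (P :|: Q).
  apply: rmono; last by rewrite subUset PE QE.
  apply/subsetP => z; rewrite !inE => /andP[zYV zE].
  case: (eqVneq z x) => [->|zx]; rewrite ?eqxx //=.
  case/orP: (vs_mem Vx zE zx) => [->//|zY]; rewrite orbC /=.
  move: zYV; rewrite zY /= => zV.
  case: (eqVneq z y) => [->|zy]; rewrite ?eqxx //=.
  by case/orP: (vs_mem Vy zE zy) => [->//|]; rewrite (negbTE zV).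
have YUV_E : Y :|: V \subset E by rewrite subUset (vs_YE Vx) (vs_YE Vy).
have s6 : r (E :\: a) <= r (Y :|: V).
  have h1 : r (y |: (Y :|: V)) <= r (Y :|: V).
    apply: (@rcl V) => //; first exact: subsetUr.
    by rewrite (vs_clY Vy).
  have h2 : r (x |: (y |: (Y :|: V))) <= r (y |: (Y :|: V)).
    apply: (@rcl Y) => //.
    - by apply: subset_trans (subsetUr _ _); apply: subsetUl.
    - exact: U1E.
    - by rewrite (vs_clY Vx).
  apply: leq_trans h1; apply: leq_trans h2; apply: rmono; last by do 2 apply: U1E => //.
  apply/subsetP => z; rewrite !inE => /andP[za zE].
  case: (eqVneq z x) => [->|zx]; rewrite ?eqxx //=.
  case: (eqVneq z y) => [->|zy]; rewrite ?eqxx //=.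
  case/orP: (vs_mem Vx zE zx) => [zX|->//].
  move: za; rewrite zX /= => zU.
  case/orP: (vs_mem Vy zE zy) => [zU'|->]; last by rewrite ?orbT.
  by rewrite zU' in zU.
have key : r (x |: (y |: a)) + r (E :\: a) <= r E + 2.
  have := vs_sum Vx; have := vs_sum Vy; rewrite /P /Q (vs_clX Vx) (vs_clX Vy) in s1 s4.
  move=> h1 h2; clear -s1 s2 s3 s4 s6 h1 h2; lia.
have aH : a \subset H.
  apply: subset_trans XH; apply/subsetP => z; rewrite !inE => /andP[zX zU].
  rewrite zX andbT; apply/eqP => zy; move: (vs_xX Vy); rewrite -zy zU //.
have aE : a \subset E := subset_trans aH HE.
have Ea : 0 < #|E :\: a|.
  by apply/card_gt0P; exists x; rewrite !inE xE andbT (negbTE (vs_xX Vx)).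
have xya : r (a) < r (x |: (y |: a)).
  apply: (@leq_trans (r (x |: a))); first by rewrite (rHx aH xCs).
  apply: rmono.
    by apply/subsetP => z; rewrite !inE => /orP[->|->]; rewrite ?orbT.
  by apply: U1E => //; apply: U1E.
case: (boolP [exists w', (w' \in a) && (w' != w)]).
  case/existsP => w' /andP[w'a w'w].
  have : 1 < #|E :\: a|.
    apply: (@card2 _ x y) => //.
    - by rewrite !inE xE andbT (negbTE (vs_xX Vx)).
    - by rewrite !inE yE andbT (negbTE (vs_xX Vy)) andbF.
  move=> c2; have := conn2 aE (card2 w'a wa w'w) c2.
  move=> h; clear -h key xya; lia.
rewrite negb_exists => /forallP hw.
have ca : #|a| <= 1.
  rewrite -(cards1 w); apply: subset_leq_card; apply/subsetP => z za.
  by have := hw z; rewrite za /= negbK inE.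
have a0 : 0 < #|a| by apply/card_gt0P; exists w.
have h2 := conn1 aE a0 Ea; have h1 := rcard aE.
exists w; first exact: (subsetP aH).
apply: leq_trans (_ : r (x |: (y |: a)) <= 2).
  apply: rmono; last by apply: U1E => //; apply: U1E.
  apply/subsetP => z; rewrite !inE => /orP[/orP[]|] /eqP ->; rewrite ?eqxx ?orbT //.
  by move: wa; rewrite inE => ->; rewrite !orbT.
clear -h1 h2 ca key; lia.
Qed.


Lemma le2 A B : A \subset B -> B \subset E -> r B <= 2 -> r A <= 2.
Proof. by move=> AB BE h; apply: leq_trans h; apply: rmono. Qed.

Lemma osep z w : z \in E -> w \in E -> w != z -> ~ vert_contractible E r z ->
  exists X Y, vsep z X Y /\ w \in X.
Proof.
move=> zE wE wz nz; have [X [Y V]] := nonvc_vsep zE nz.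
case/orP: (vs_mem V wE wz) => wX; first by exists X, Y.
by exists Y, X; split => //; apply: vsep_sym.
Qed.

Lemma part1 x y : x \in Cs -> y \in Cs -> x != y ->
  ~ vert_contractible E r x -> ~ vert_contractible E r y ->
  exists L, nontrivial_line E r L /\
     (forall z, z \in Cs -> ~ vert_contractible E r z -> z \in L).
Proof.
move=> xCs yCs xy nx ny.
have xE := subE_in CsE xCs; have yE := subE_in CsE yCs.
have yx : y != x by rewrite eq_sym.
have [X [Y [Vx yX]]] := osep xE yE yx nx.
have [U [V [Vy xU]]] := osep yE xE xy ny.
have lX := vs_line Vx xCs; have lY := vs_line (vsep_sym Vx) xCs.
have lU := vs_line Vy yCs; have lV := vs_line (vsep_sym Vy) yCs.
have XCE : forall (z : T) (Z : {set T}), z \in E -> z |: (Z :&: Cs) \subset E.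
  by move=> z Z zE; apply: U1E => //; apply: subset_trans CsE; apply: subsetIr.
pose L := [set g in E | r [set x; y; g] <= 2].
have LE : L \subset E by apply/subsetP => g; rewrite inE => /andP[].
have xyE : [set x; y] \subset E by rewrite subUset !sub1set xE yE.
have rL : r L <= 2.
  apply: (@le2 L ([set x; y] :|: L)); [exact: subsetUr | by rewrite subUset xyE LE |].
  apply: line_sub => // g; rewrite inE => /andP[gE h].
  by rewrite [g |: _]setUC.
have inL g : g \in E -> r [set x; y; g] <= 2 -> g \in L by move=> gE h; rewrite inE gE h.
have xyxE : [set x; y; x] \subset E by rewrite !subUset !sub1set xE yE.
have xL : x \in L.
  apply: inL => //; apply: (@le2 _ [set x; y]) => //; last by rewrite r2.
  by apply/subsetP => z; rewrite !inE => /orP[|/eqP->]; rewrite ?eqxx.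
have yL : y \in L.
  apply: inL => //; apply: (@le2 _ [set x; y]) => //; last by rewrite r2.
  by apply/subsetP => z; rewrite !inE => /orP[|/eqP->]; rewrite ?eqxx ?orbT.
have rL2 : r L = 2.
  apply/eqP; rewrite eqn_leq rL -(r2 xE yE xy) rmono //.
  by rewrite subUset !sub1set xL yL.
have F1 g : g \in Cs -> g \notin L -> g \in Y /\ g \in V.
  move=> gCs gL; have gE := subE_in CsE gCs.
  have gx : g != x by apply/eqP => gx; move: gL; rewrite gx xL.
  have gy : g != y by apply/eqP => gy; move: gL; rewrite gy yL.
  split.
    case/orP: (vs_mem Vx gE gx) => // gX; move: gL; rewrite inL //.
    apply: le2 lX; last exact: XCE.
    by apply/subsetP => z; rewrite !inE => /orP[/orP[]|] /eqP ->; rewrite ?eqxx ?xCs ?yX ?yCs ?gX ?gCs ?orbT.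
  case/orP: (vs_mem Vy gE gy) => // gU; move: gL; rewrite inL //.
  apply: le2 lU; last exact: XCE.
  by apply/subsetP => z; rewrite !inE => /orP[/orP[]|] /eqP ->; rewrite ?eqxx ?xCs ?xU ?yCs ?gU ?gCs ?orbT.
have [c cCs cL] : exists2 c, c \in Cs & c \notin L.
  case: (boolP (Cs \subset L)) => [CL|]; last by move/subsetPn.
  by have := rmono CL LE; rewrite HC3 rL2.
have cE := subE_in CsE cCs.
have [cY cV] := F1 c cCs cL.
have xc : x != c by apply/eqP => xc; move: cL; rewrite -xc xL.
have yc : y != c by apply/eqP => yc; move: cL; rewrite -yc yL.
have F3 g : g \in Cs -> g \notin L -> g = c.
  move=> gCs gL; apply/eqP; apply/negPn/negP => gc.
  have gE := subE_in CsE gCs.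
  have [gY gV] := F1 g gCs gL.
  move: gL; rewrite inL //.
  have gcE : [set g; c] :|: [set x; y] \subset E by rewrite !subUset !sub1set gE cE xE yE.
  apply: (@le2 _ ([set g; c] :|: [set x; y])) => //.
    by apply/subsetP => z; rewrite !inE => /orP[/orP[]|] ->; rewrite ?orbT.
  apply: line_sub => // z; rewrite !inE => /orP[] /eqP ->.
    apply: le2 lY; last exact: XCE.
    by apply/subsetP => w; rewrite !inE => /orP[|/orP[]] /eqP ->; rewrite ?eqxx ?xCs ?gY ?gCs ?cY ?cCs ?orbT.
  apply: le2 lV; last exact: XCE.
  by apply/subsetP => w; rewrite !inE => /orP[|/orP[]] /eqP ->; rewrite ?eqxx ?yCs ?gV ?gCs ?cV ?cCs ?orbT.
have cVC : ~ ~ vert_contractible E r c.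
  move=> nc.
  have cx : x != c := xc.
  have [S0 [T0 [Vc xS]]] := osep cE xE xc nc.
  have lS := vs_line Vc cCs; have lT := vs_line (vsep_sym Vc) cCs.
  have yS : y \notin S0.
    apply/negP => yS; move: cL; rewrite inL //.
    apply: le2 lS; last exact: XCE.
    by apply/subsetP => z; rewrite !inE => /orP[/orP[]|] /eqP ->; rewrite ?eqxx ?xCs ?xS ?yS ?yCs ?cCs ?orbT.
  have yT : y \in T0.
    by case/orP: (vs_mem Vc yE yc) => // yS'; move: yS; rewrite yS'.
  have Csub : Cs \subset [set x; y; c].
    apply/subsetP => g gCs; rewrite !inE.
    case: (eqVneq g x) => //= gx; case: (eqVneq g y) => //= gy.
    case: (eqVneq g c) => //= gc.
    have gL : g \in L by apply/negPn/negP => gL; move: gc; rewrite (F3 g gCs gL) eqxx.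
    have gE := subE_in CsE gCs.
    have rg : r [set x; y; g] <= 2 by move: gL; rewrite inE => /andP[].
    exfalso; move: cL; rewrite inL //.
    case/orP: (vs_mem Vc gE gc) => gS.
      have E1 : [set x; g] :|: [set y; c] \subset E by rewrite !subUset !sub1set xE gE yE cE.
      apply: (@le2 _ ([set x; g] :|: [set y; c])) => //.
        by apply/subsetP => z; rewrite !inE => /orP[/orP[]|] ->; rewrite ?orbT.
      have xg : x != g by rewrite eq_sym.
      have ycE : [set y; c] \subset E by rewrite !subUset !sub1set yE cE.
      apply: (line_sub xE gE xg ycE).
      move=> z; rewrite !inE => /orP[] /eqP ->.
        apply: le2 rg; last by rewrite !subUset !sub1set xE yE gE.
        by apply/subsetP => w; rewrite !inE => /orP[|/orP[]] ->; rewrite ?orbT.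
      apply: le2 lS; last exact: XCE.
      by apply/subsetP => w; rewrite !inE => /orP[|/orP[]] /eqP ->; rewrite ?eqxx ?xCs ?xS ?gS ?gCs ?cCs ?orbT.
    have E1 : [set y; g] :|: [set x; c] \subset E by rewrite !subUset !sub1set xE gE yE cE.
    apply: (@le2 _ ([set y; g] :|: [set x; c])) => //.
      by apply/subsetP => z; rewrite !inE => /orP[/orP[]|] ->; rewrite ?orbT.
    have yg : y != g by rewrite eq_sym.
    have xcE : [set x; c] \subset E by rewrite !subUset !sub1set xE cE.
    apply: (line_sub yE gE yg xcE).
    move=> z; rewrite !inE => /orP[] /eqP ->.
      apply: le2 rg; last by rewrite !subUset !sub1set xE yE gE.
      by apply/subsetP => w; rewrite !inE => /orP[|/orP[]] ->; rewrite ?orbT.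
    apply: le2 lT; last exact: XCE.
    by apply/subsetP => w; rewrite !inE => /orP[|/orP[]] /eqP ->; rewrite ?eqxx ?yCs ?yT ?gS ?gCs ?cCs ?orbT.
  have Csub' : Cs \subset [set y; c; x].
    by apply: subset_trans Csub _; apply/subsetP => z; rewrite !inE => /orP[/orP[]|] ->; rewrite ?orbT.
  have cx' : c != x by rewrite eq_sym.
  have [w wH rw] := triad yCs cCs xCs yc yx cx' Csub' (vsep_sym Vy) cV xU (vsep_sym Vc) yT xS.
  have memCs g : g \in Cs -> [\/ g = x, g = y | g = c].
    by move/(subsetP Csub); rewrite !inE => /orP[/orP[]|] /eqP ->; constructor.
  have XH : X :\ y \subset E :\: Cs.
    apply: (sideH Vx yX) => g /memCs [E1|E1|E1] gX; rewrite E1 in gX *; rewrite //.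
    - by move: (vs_xX Vx); rewrite gX.
    - by case: (vs_XnY Vx gX cY).
  have YH : Y :\ c \subset E :\: Cs.
    apply: (sideH (vsep_sym Vx) cY) => g /memCs [E1|E1|E1] gY; rewrite E1 in gY *; rewrite //.
    - by move: (vs_xY Vx); rewrite gY.
    - by case: (vs_XnY Vx yX gY).
  have Nc := vs_N (vsep_sym Vx) cY cCs YH.
  have Ny := vs_N Vx yX yCs XH.
  move: wH; rewrite inE => /andP[wCs wE].
  have wx : w != x by apply/eqP => wx; move: wCs; rewrite wx xCs.
  have yw : y != w by apply/eqP => yw; move: wCs; rewrite -yw yCs.
  have cw : c != w by apply/eqP => cw; move: wCs; rewrite -cw cCs.
  case/orP: (vs_mem Vx wE wx) => wX.
    have := @rcl [set y; w] (x |: X) c.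
    rewrite !subUset !sub1set !inE yX wX !orbT (vs_XE Vx) xE => /(_ isT isT cE).
    rewrite r2 // => h.
    have : r (c |: [set y; w]) <= 2.
      apply: le2 rw; last by rewrite !subUset !sub1set yE cE wE.
      by apply/subsetP => z; rewrite !inE => /orP[|/orP[]] ->; rewrite ?orbT.
    by move/h; rewrite leqNgt Nc.
  have := @rcl [set c; w] (x |: Y) y.
  rewrite !subUset !sub1set !inE cY wX !orbT (vs_YE Vx) xE => /(_ isT isT yE).
  rewrite r2 // => h.
  have : r (y |: [set c; w]) <= 2.
    apply: le2 rw; last by rewrite !subUset !sub1set yE cE wE.
    by apply/subsetP => z; rewrite !inE => /orP[|/orP[]] ->; rewrite ?orbT.
  by move/h; rewrite leqNgt Ny.
exists L; split; last first.
  move=> z zCs nz; apply/negPn/negP => zL.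
  by apply: cVC; rewrite -(F3 z zCs zL).
split; last first.
- case: (boolP (Cs \subset [set x; y; c])) => [Csub|].
    have [w wH rw] := triad xCs yCs cCs xy xc yc Csub Vx yX cY Vy xU cV.
    move: wH; rewrite inE => /andP[wCs wE].
    apply: (@card3 _ x y w) => //; first exact: inL.
      by apply/eqP => xw; move: wCs; rewrite -xw xCs.
    by apply/eqP => yw; move: wCs; rewrite -yw yCs.
  case/subsetPn => g gCs; rewrite !inE => /norP[/norP[gx gy] gc].
  have gL : g \in L by apply/negPn/negP => gL; move: gc; rewrite (F3 g gCs gL) eqxx.
  by apply: (@card3 _ x y g) => //; rewrite eq_sym.
- exact: rL2.
split => // e; rewrite !inE => /andP[eL eE].
rewrite rL2; apply: leq_trans (_ : r [set x; y; e] <= _).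
  by move: eL; rewrite eE andTb -ltnNge.
apply: rmono; last by apply: U1E.
by apply/subsetP => z; move/setUP => [/setUP [] | ] /set1P ->; rewrite in_setU1 ?eqxx ?xL ?yL ?orbT.
Qed.

Lemma final :
  ((exists x y, [/\ x \in Cs, y \in Cs, x != y,
                    ~ vert_contractible E r x & ~ vert_contractible E r y]) ->
   exists L, nontrivial_line E r L /\
     (forall z, z \in Cs -> ~ vert_contractible E r z -> z \in L)) /\
  (exists z, z \in Cs /\ vert_contractible E r z).
Proof.
split; first by move=> [x [y [xC yC xy nx ny]]]; apply: (part1 xC yC xy nx ny).
apply: NNPP => h.
have nv z : z \in Cs -> ~ vert_contractible E r z by move=> zC vz; apply: h; exists z.
have [x [y [xC yC xy]]] := card_gt1P (ltnW Cs3).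
have [L [[[LE _] rL _] hL]] := part1 xC yC xy (nv x xC) (nv y yC).
have CL : Cs \subset L by apply/subsetP => z zC; apply: hL => //; exact: nv.
by have := rmono CL LE; rewrite HC3 rL.
Qed.

End Cocirc.

End Base.


Theorem proposition5p16 (T : finType) (E : {set T}) (r : {set T} -> nat) :
  is_matroid E r -> simple E r -> three_connected E r -> 3 <= r E ->
  forall Cs : {set T}, cocircuit E r Cs -> r Cs = 3 ->
  ((exists x y, [/\ x \in Cs, y \in Cs, x != y,
                    ~ vert_contractible E r x & ~ vert_contractible E r y]) ->
   exists L, nontrivial_line E r L /\
     (forall z, z \in Cs -> ~ vert_contractible E r z -> z \in L)) /\
  (exists z, z \in Cs /\ vert_contractible E r z).
Proof.
move=> HM HS H3 _ Cs HC HC3.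
exact: (final HM HS H3 HC HC3).
Qed.
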